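(* Suppose a unitary $C$ is written in the form $$C=H_{\mathbf a}P_{\mathbf d}Z_{\mathbf D}\,\mathbf H\,e^{\mathrm{i}\phi}X_{\mathbf u}Z_{\mathbf v}P_{\mathbf b}Z_{\mathbf B}X_{\mathbf A}$$ with $\mathbf a,\mathbf d,\mathbf u,\mathbf v,\mathbf b\in\mathbb F_2^n$, $\mathbf D,\mathbf B\in\mathcal B_n$, $\mathbf A\in GL_n(\mathbb F_2)$ and $\phi\in\{k\pi/4:k\in\mathbb Z\}$. Then for every $i\in\{0,\dots,n-1\}$, the product $P_iC$ can also be written in this form (with possibly different data of the same types).
   Context: Qubits are labelled $0,\dots,n-1$; computational basis $\{|x\rangle:x\in\mathbb F_2^n\}$; $\mathrm{i}=\sqrt{-1}$. One-qubit gates $\mathtt H=\frac1{\sqrt2}\begin{pmatrix}1&1\\1&-1\end{pmatrix}$, $\mathtt P=\mathrm{diag}(1,\mathrm{i})$, $\mathtt Z=\mathrm{diag}(1,-1)$, $\mathtt X=\begin{pmatrix}0&1\\1&0\end{pmatrix}$; $U_i$ denotes the gate $\mathtt U$ acting on qubit $i$, and $U_{\mathbf a}=\prod_iU_i^{a_i}$ for $\mathbf a\in\mathbb F_2^n$. $\mathbf H=\prod_{i=0}^{n-1}H_i$. For $\mathbf A\in GL_n(\mathbb F_2)$, $X_{\mathbf A}|x\rangle=|\mathbf Ax\rangle$. $\mathcal B_n$ is the set of symmetric $n\times n$ matrices over $\mathbb F_2$ with zero diagonal, and for $\mathbf B\in\mathcal B_n$, $Z_{\mathbf B}|x\rangle=(-1)^{\sum_{i<j}b_{ij}x_ix_j}|x\rangle$.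 *)

(* Defs.v *)
From mathcomp Require Import all_boot all_order all_algebra all_field.
Set Implicit Arguments. Unset Strict Implicit. Unset Printing Implicit Defensive.
Import Order.TTheory GRing.Theory Num.Theory.
Local Open Scope ring_scope.

(* Computational basis vectors x in F_2^n, as column vectors over 'F_2. *)
Definition bvec (n : nat) := 'cV['F_2]_n.

Definition dim (n : nat) : nat := #|{: bvec n}|.

(* Operators on (C^2)^{\otimes n}, as complex (algebraic) matrices whose rows
   and columns are indexed by the basis vectors |x>, x in F_2^n (via enum_val). *)
Definition op (n : nat) := 'M[algC]_(dim n).

Definition mkop (n : nat) (f : bvec n -> bvec n -> algC) : op n :=
  \matrix_(r < dim n, c < dim n) f (enum_val r) (enum_val c).

Definition sgnF2 (e : 'F_2) : algC := if e == 0 then 1 else -1.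

Definition bit (n : nat) (x : bvec n) (i : 'I_n) : 'F_2 := x i 0.

Definition Hgate (n : nat) (i : 'I_n) : op n :=
  mkop (fun x y => if [forall j, (j != i) ==> (bit x j == bit y j)]
                   then sgnF2 (bit x i * bit y i) / sqrtC 2 else 0).
Definition Pgate (n : nat) (i : 'I_n) : op n :=
  mkop (fun x y => if x == y then (if bit x i == 1 then 'i else 1) else 0).
Definition Zgate (n : nat) (i : 'I_n) : op n :=
  mkop (fun x y => if x == y then sgnF2 (bit x i) else 0).
Definition Xgate (n : nat) (i : 'I_n) : op n :=
  mkop (fun x y => if x == y + delta_mx i 0 then 1 else 0).

Definition gprod (n : nat) (U : 'I_n -> op n) (a : bvec n) : op n :=
  foldr (fun i M => (if bit a i == 1 then U i else 1%:M) *m M) 1%:M (enum 'I_n).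

Definition H_ (n : nat) (a : bvec n) : op n := gprod (@Hgate n) a.
Definition P_ (n : nat) (a : bvec n) : op n := gprod (@Pgate n) a.
Definition Z_ (n : nat) (a : bvec n) : op n := gprod (@Zgate n) a.
Definition X_ (n : nat) (a : bvec n) : op n := gprod (@Xgate n) a.

Definition Hall (n : nat) : op n := H_ (const_mx 1).

Definition XA (n : nat) (A : 'M['F_2]_n) : op n :=
  mkop (fun x y => if x == A *m y then 1 else 0).

Definition Bmat (n : nat) (B : 'M['F_2]_n) : bool :=
  (B^T == B) && [forall i, B i i == 0].

Definition ZB (n : nat) (B : 'M['F_2]_n) : op n :=
  mkop (fun x y => if x == y then
          sgnF2 (\sum_(i < n) \sum_(j < n | (i < j)%N) B i j * bit x i * bit x j)
        else 0).

(* e^{i pi/4} *)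
Definition omega8 : algC := (1 + 'i) / sqrtC 2.

Definition cliff_form (n : nat) (a d : bvec n) (D : 'M['F_2]_n) (k : int)
    (u v b : bvec n) (B A : 'M['F_2]_n) : op n :=
  H_ a *m P_ d *m ZB D *m Hall n *m (omega8 ^ k *: (X_ u *m Z_ v *m P_ b *m ZB B *m XA A)).

Definition has_cliff_form (n : nat) (C : op n) : Prop :=
  exists (a d u v b : bvec n) (D B A : 'M['F_2]_n) (k : int),
    [/\ Bmat D, Bmat B, A \in unitmx & C = cliff_form a d D k u v b B A].

(* Main.v *)
Require Import Defs.
From mathcomp Require Import all_boot all_order all_algebra all_field.
From mathcomp Require Import ring.
Set Implicit Arguments. Unset Strict Implicit. Unset Printing Implicit Defensive.
Import Order.TTheory GRing.Theory Num.Theory.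
Local Open Scope ring_scope.

Lemma F2P (x : 'F_2) : x = 0 \/ x = 1.
Proof. case: x => [[|[|m]]] //= H. by left; apply/val_inj. by right; apply/val_inj. Qed.

Section Kern.
Variable n : nat.
Implicit Types (x y z w : bvec n).

Lemma big_bvec (F : bvec n -> algC) :
  \sum_(r < Defs.dim n) F (enum_val r) = \sum_z F z.
Proof.
rewrite (reindex (@enum_val _ (pred_of_simpl (pred_of_argType (bvec n))))) //.
by apply: onW_bij; exists enum_rank; [apply: enum_valK | apply: enum_rankK].
Qed.

Lemma mkop_mul f g :
  mkop f *m mkop g = mkop (fun x y => \sum_z f x z * g z y).
Proof.
apply/matrixP => r c; rewrite !mxE.
under eq_bigr do rewrite !mxE.
by rewrite (big_bvec (fun z => f (enum_val r) z * g z (enum_val c))).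
Qed.

Lemma mkop_ext f g : (forall x y, f x y = g x y) -> mkop f = mkop g.
Proof. by move=> H; apply/matrixP => r c; rewrite !mxE H. Qed.

Lemma mkop_scale (c : algC) f : c *: mkop f = mkop (fun x y => c * f x y).
Proof. by apply/matrixP => r c'; rewrite !mxE. Qed.

Lemma mkop1 : 1%:M = mkop (fun x y => (x == y)%:R) :> op n.
Proof.
apply/matrixP => r c; rewrite !mxE.
by rewrite (inj_eq enum_val_inj).
Qed.

Lemma bvec_eqE x y : (x == y) = [forall j, x j 0 == y j 0].
Proof.
apply/eqP/forallP => [-> //|H]; apply/matrixP => j k.
by rewrite (ord1 k); apply/eqP.
Qed.

Definition prodop (F : 'I_n -> 'F_2 -> 'F_2 -> algC) : op n :=
  mkop (fun x y => \prod_j F j (x j 0) (y j 0)).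

Lemma prodop_mul F G :
  prodop F *m prodop G = prodop (fun j p q => \sum_r F j p r * G j r q).
Proof.
rewrite mkop_mul; apply: mkop_ext => x y.
rewrite bigA_distr_bigA /=.
rewrite (reindex (fun f : {ffun 'I_n -> 'F_2} => \col_j f j)) /=; last first.
  apply: onW_bij; exists (fun z : bvec n => [ffun j => z j 0]).
    by move=> f; apply/ffunP => j; rewrite ffunE mxE.
  by move=> z; apply/matrixP => j k; rewrite mxE ffunE (ord1 k).
apply: eq_bigr => f _; rewrite -big_split /=.
by apply: eq_bigr => j _; rewrite !mxE.
Qed.


Lemma prodop_ext F G : (forall j p q, F j p q = G j p q) -> prodop F = prodop G.
Proof. by move=> H; apply: mkop_ext => x y; apply: eq_bigr => j _; rewrite H. Qed.

Definition dl (p q : 'F_2) : algC := (p == q)%:R.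

Lemma sum_F2 (F : 'F_2 -> algC) : \sum_r F r = F 0 + F 1.
Proof.
rewrite (bigD1 0) //= (bigD1 1) //= big1 ?addr0 // => r /andP [H0 H1].
by case: (F2P r) H0 H1 => ->.
Qed.

Lemma sum_dl_l p (F : 'F_2 -> algC) : \sum_r dl p r * F r = F p.
Proof.
rewrite sum_F2 /dl; case: (F2P p) => ->; rewrite ?eqxx /=;
  by rewrite ?mul1r ?mul0r ?addr0 ?add0r.
Qed.

Lemma sum_dl_r q (F : 'F_2 -> algC) : \sum_r F r * dl r q = F q.
Proof.
rewrite sum_F2 /dl; case: (F2P q) => ->; rewrite ?eqxx /=;
  by rewrite ?mulr1 ?mulr0 ?addr0 ?add0r.
Qed.

Lemma prod_nat_forall (P : pred 'I_n) (B : 'I_n -> bool) :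
  \prod_(j | P j) ((B j)%:R : algC) = [forall j, P j ==> B j]%:R.
Proof.
case: forallP => H.
  by rewrite big1 // => j Pj; move: (H j); rewrite Pj /= => ->.
have [j Hj] : exists j, ~~ (P j ==> B j).
  by apply/existsP; rewrite -negb_forall; apply/forallP.
move: Hj; rewrite negb_imply => /andP [Pj Bj].
by rewrite (bigD1 j) //= (negbTE Bj) mul0r.
Qed.

Lemma prod_dl x y : \prod_j dl (x j 0) (y j 0) = (x == y)%:R.
Proof. by rewrite /dl prod_nat_forall bvec_eqE. Qed.

Lemma prodop_dl : prodop (fun _ => dl) = 1%:M.
Proof. by rewrite mkop1; apply: mkop_ext => x y; rewrite prod_dl. Qed.

Lemma prodop_loc i (u : 'F_2 -> 'F_2 -> algC) :
  prodop (fun j => if j == i then u else dl) =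
  mkop (fun x y => [forall j, (j != i) ==> (x j 0 == y j 0)]%:R * u (x i 0) (y i 0)).
Proof.
apply: mkop_ext => x y; rewrite (bigD1 i) //= eqxx mulrC; congr (_ * _).
rewrite -prod_nat_forall; apply: eq_bigr => j /negbTE ->; done.
Qed.

Lemma bvec_eq_split x y i :
  (x == y) = [forall j, (j != i) ==> (x j 0 == y j 0)] && (x i 0 == y i 0).
Proof.
rewrite bvec_eqE; apply/forallP/andP => [H|[/forallP H1 H2] j].
  split; last exact: H. by apply/forallP => j; apply/implyP.
by case: (eqVneq j i) => [->//|/(implyP (H1 j))].
Qed.

Definition hl (p q : 'F_2) : algC := sgnF2 (p * q) / sqrtC 2.
Definition ipow (p : 'F_2) : algC := if p == 1 then 'i else 1.
Definition pl (p q : 'F_2) : algC := dl p q * ipow p.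
Definition zl (p q : 'F_2) : algC := dl p q * sgnF2 p.
Definition xl (p q : 'F_2) : algC := dl p (q + 1).

Lemma Hgate_prod i : Hgate i = prodop (fun j => if j == i then hl else dl).
Proof.
rewrite prodop_loc; apply: mkop_ext => x y.
by case: forallP => H /=; rewrite ?mul1r ?mul0r.
Qed.

Lemma Pgate_prod i : Pgate i = prodop (fun j => if j == i then pl else dl).
Proof.
rewrite prodop_loc; apply: mkop_ext => x y.
rewrite (bvec_eq_split x y i) /pl /dl /ipow /bit.
by case: forallP => H /=; case: (eqVneq (x i 0) (y i 0)) => [->|] //=; rewrite ?mul1r ?mul0r.
Qed.

Lemma Zgate_prod i : Zgate i = prodop (fun j => if j == i then zl else dl).
Proof.
rewrite prodop_loc; apply: mkop_ext => x y.
rewrite (bvec_eq_split x y i) /zl /dl /bit.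
by case: forallP => H /=; case: (eqVneq (x i 0) (y i 0)) => [->|] //=; rewrite ?mul1r ?mul0r.
Qed.

Lemma Xgate_prod i : Xgate i = prodop (fun j => if j == i then xl else dl).
Proof.
rewrite prodop_loc; apply: mkop_ext => x y.
have -> : (x == y + delta_mx i 0) =
   [forall j, (j != i) ==> (x j 0 == y j 0)] && (x i 0 == y i 0 + 1).
  rewrite (bvec_eq_split _ _ i) !mxE eqxx /=; congr (_ && _).
  apply: eq_forallb => j; case: (eqVneq j i) => //= ji.
  by rewrite !mxE (negbTE ji) addr0.
by rewrite /xl /dl; case: forallP => H /=; case: eqP => _; rewrite ?mul1r ?mul0r.
Qed.

Lemma gprod_prod (U : 'I_n -> op n) (u : 'I_n -> 'F_2 -> 'F_2 -> algC) a :
  (forall i, U i = prodop (fun j => if j == i then u i else dl)) ->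
  gprod U a = prodop (fun j => if a j 0 == 1 then u j else dl).
Proof.
move=> HU.
suff: forall s, uniq s -> foldr (fun i M => (if bit a i == 1 then U i else 1%:M) *m M) 1%:M s
   = prodop (fun j => if (j \in s) && (a j 0 == 1) then u j else dl).
  move/(_ (enum 'I_n) (enum_uniq _)); rewrite /gprod => ->.
  by apply: prodop_ext => j p q; rewrite mem_enum.
elim=> [_|j s IH /andP [js us]] /=.
  by rewrite -prodop_dl; apply: prodop_ext.
rewrite IH // /bit; case: ifP => aj.
  rewrite HU prodop_mul; apply: prodop_ext => k p q.
  rewrite in_cons; case: (eqVneq k j) => [->|kj] /=.
    by rewrite (negbTE js) aj sum_dl_r.
  by rewrite sum_dl_l.
rewrite -prodop_dl prodop_mul; apply: prodop_ext => k p q.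
rewrite sum_dl_l in_cons; case: (eqVneq k j) => [->|kj] //=.
by move: aj; rewrite /bit => ->; rewrite andbF.
Qed.


Definition diagop (f : bvec n -> algC) : op n := mkop (fun x y => (x == y)%:R * f x).
Definition dotv (v s : bvec n) : 'F_2 := \sum_j v j 0 * s j 0.
Definition qf (B : 'M['F_2]_n) (s : bvec n) : 'F_2 :=
  \sum_(i < n) \sum_(j < n | (i < j)%N) B i j * s i 0 * s j 0.
Definition NF (k : int) (v b : bvec n) (B : 'M['F_2]_n) (s : bvec n) : algC :=
  omega8 ^ k * (sgnF2 (dotv v s) * (\prod_j ipow (b j 0 * s j 0) * sgnF2 (qf B s))).
Definition hker (a x w : bvec n) : algC :=
  \prod_j (if a j 0 == 1 then hl else dl) (x j 0) (w j 0).
Definition cn : algC := (sqrtC 2)^-1 ^+ n.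
Definition KF (a : bvec n) (f : bvec n -> algC) (A : 'M['F_2]_n) (u : bvec n)
  (g : bvec n -> algC) (x y : bvec n) : algC :=
  \sum_w hker a x w * f w * sgnF2 (dotv w (A *m y + u)) * g (A *m y).

Lemma sgnF2D (p q : 'F_2) : sgnF2 (p + q) = sgnF2 p * sgnF2 q.
Proof.
rewrite /sgnF2; case: (F2P p) => ->; case: (F2P q) => ->; rewrite ?eqxx ?mul1r ?mulr1 //=.
by rewrite mulrNN mulr1.
Qed.

Lemma sgnF20 : sgnF2 0 = 1.
Proof. by []. Qed.

Lemma sgnF2_sum (I : finType) (P : pred I) (F : I -> 'F_2) :
  sgnF2 (\sum_(j | P j) F j) = \prod_(j | P j) sgnF2 (F j).
Proof. exact: (big_morph sgnF2 sgnF2D sgnF20). Qed.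

Lemma sum_pred1_r (F : bvec n -> algC) c : \sum_z F z * (z == c)%:R = F c.
Proof.
rewrite (bigD1 c) //= eqxx mulr1 big1 ?addr0 // => z /negbTE ->; by rewrite mulr0.
Qed.

Lemma sum_pred1_l (F : bvec n -> algC) c : \sum_z (z == c)%:R * F z = F c.
Proof.
rewrite (bigD1 c) //= eqxx mul1r big1 ?addr0 // => z /negbTE ->; by rewrite mul0r.
Qed.

Lemma P_diag b : P_ b = diagop (fun x => \prod_j ipow (b j 0 * x j 0)).
Proof.
rewrite /P_ (gprod_prod (u := fun _ => pl) b Pgate_prod).
apply: mkop_ext => x y; rewrite -prod_dl -big_split /=.
apply: eq_bigr => j _; rewrite /pl; case: (F2P (b j 0)) => ->; rewrite ?eqxx ?mul1r //=.
by rewrite mul0r /ipow /= mulr1.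
Qed.

Lemma Z_diag v : Z_ v = diagop (fun x => sgnF2 (dotv v x)).
Proof.
rewrite /Z_ (gprod_prod (u := fun _ => zl) v Zgate_prod).
apply: mkop_ext => x y; rewrite -prod_dl /dotv sgnF2_sum -big_split /=.
apply: eq_bigr => j _; rewrite /zl; case: (F2P (v j 0)) => ->; rewrite ?eqxx ?mul1r //=.
by rewrite mul0r /sgnF2 /= mulr1.
Qed.

Lemma X_ker u : X_ u = mkop (fun x y => (x == y + u)%:R).
Proof.
rewrite /X_ (gprod_prod (u := fun _ => xl) u Xgate_prod).
apply: mkop_ext => x y; rewrite -prod_dl.
apply: eq_bigr => j _; rewrite /xl /dl !mxE; case: (F2P (u j 0)) => ->; rewrite ?eqxx //=.
by rewrite addr0.
Qed.

Lemma H_ker a : H_ a = mkop (fun x w => hker a x w).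
Proof. by rewrite /H_ (gprod_prod (u := fun _ => hl) a Hgate_prod). Qed.

Lemma Hall_ker : Hall n = mkop (fun w t => cn * sgnF2 (dotv w t)).
Proof.
rewrite /Hall H_ker; apply: mkop_ext => x y.
have -> : cn = \prod_(j < n) (sqrtC 2)^-1 by rewrite prodr_const card_ord.
rewrite /hker /dotv sgnF2_sum -big_split /=.
by apply: eq_bigr => j _; rewrite mxE eqxx /hl mulrC.
Qed.

Lemma ZB_diag B : ZB B = diagop (fun x => sgnF2 (qf B x)).
Proof. by apply: mkop_ext => x y; rewrite /bit /qf; case: eqP => _; rewrite ?mul1r ?mul0r. Qed.

Lemma diag_mul f g : diagop f *m diagop g = diagop (fun x => f x * g x).
Proof.
rewrite mkop_mul; apply: mkop_ext => x y.
under eq_bigr do rewrite mulrA (mulrC _ (_ == y)%:R) -!mulrA.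
rewrite sum_pred1_l; case: eqP => [->|_]; by rewrite ?mul1r ?mul0r.
Qed.

Lemma mk_diag K g : mkop K *m diagop g = mkop (fun x y => K x y * g y).
Proof.
rewrite mkop_mul; apply: mkop_ext => x y.
under eq_bigr do rewrite mulrA (mulrC _ (_ == y)%:R) -mulrA.
by rewrite sum_pred1_l.
Qed.

Lemma diag_mk f K : diagop f *m mkop K = mkop (fun x y => f x * K x y).
Proof.
rewrite mkop_mul; apply: mkop_ext => x y.
under eq_bigr => z _ do rewrite eq_sym -mulrA.
by rewrite sum_pred1_l.
Qed.

Lemma mk_collapse K (F : bvec n -> bvec n) (G : bvec n -> algC) :
  mkop K *m mkop (fun z y => (z == F y)%:R * G y) = mkop (fun x y => K x (F y) * G y).
Proof.
rewrite mkop_mul; apply: mkop_ext => x y.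
under eq_bigr do rewrite mulrA mulrAC.
exact: (sum_pred1_r (fun z => K x z * G y)).
Qed.

Lemma dotv0l s : dotv 0 s = 0.
Proof. by rewrite /dotv big1 // => j _; rewrite mxE mul0r. Qed.

Definition NF0 d D := NF 0 0 d D.

Lemma cliff_kernel a d D k u v b B A :
  cliff_form a d D k u v b B A =
  mkop (fun x y => cn * KF a (NF0 d D) A u (NF k v b B) x y).
Proof.
rewrite /cliff_form -scalemxAr.
have -> : X_ u *m Z_ v *m P_ b *m ZB B *m XA A =
          mkop (fun z y => (z == A *m y + u)%:R * NF 0 v b B (A *m y)).
  have -> : X_ u *m Z_ v *m P_ b *m ZB B *m XA A = X_ u *m ((Z_ v *m P_ b *m ZB B) *m XA A)
    by rewrite !mulmxA.
  rewrite Z_diag P_diag ZB_diag !diag_mul.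
  rewrite /XA diag_mk X_ker mkop_mul; apply: mkop_ext => x y.
  have E : forall z, (if z == A *m y then 1 else 0) = (z == A *m y)%:R :> algC
    by move=> z; case: eqP.
  under eq_bigr do rewrite E mulrA.
  rewrite sum_pred1_r.
  by rewrite /NF expr0z mul1r !mulrA.
have -> : H_ a *m P_ d *m ZB D = H_ a *m (P_ d *m ZB D) by rewrite mulmxA.
rewrite P_diag ZB_diag diag_mul H_ker mk_diag Hall_ker mkop_mul.
rewrite mk_collapse mkop_scale; apply: mkop_ext => x y.
rewrite /KF mulr_suml mulr_sumr mulr_sumr; apply: eq_bigr => w _.
rewrite /NF0 /NF dotv0l expr0z sgnF20 !mul1r. ring.
Qed.


Lemma Pgate_diag i : Pgate i = diagop (fun x => ipow (x i 0)).
Proof. by apply: mkop_ext => x y; rewrite /bit /ipow; case: eqP => _; rewrite ?mul1r ?mul0r. Qed.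

Definition isNF (f : bvec n -> algC) := exists k v b B, forall s, f s = NF k v b B s.

Definition symm (B : 'M['F_2]_n) : 'M['F_2]_n :=
  \matrix_(j, k) (if (j < k)%N then B j k else if (k < j)%N then B k j else 0).

Lemma Bmat_symm B : Bmat (symm B).
Proof.
apply/andP; split.
  apply/eqP/matrixP => j k; rewrite !mxE.
  by case: (ltngtP j k) => //.
by apply/forallP => j; rewrite mxE ltnn.
Qed.

Lemma qf_symm B s : qf (symm B) s = qf B s.
Proof. by apply: eq_bigr => j _; apply: eq_bigr => k jk; rewrite mxE jk. Qed.

Lemma dotvDr w s t : dotv w (s + t) = dotv w s + dotv w t.
Proof. by rewrite /dotv -big_split; apply: eq_bigr => j _; rewrite mxE mulrDr. Qed.

Lemma dotvDl w s t : dotv (s + t) w = dotv s w + dotv t w.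
Proof. by rewrite /dotv -big_split; apply: eq_bigr => j _; rewrite mxE mulrDl. Qed.

Lemma dotvC s t : dotv s t = dotv t s.
Proof. by apply: eq_bigr => j _; rewrite mulrC. Qed.

Lemma omega8_neq0 : omega8 != 0.
Proof.
rewrite /omega8 mulf_neq0 // ?invr_neq0 ?sqrtC_eq0 ?pnatr_eq0 //.
apply/eqP => H.
have Hi : 'i = -1 :> algC by apply/eqP; rewrite -addr_eq0 addrC H.
have := sqrCi algC; rewrite Hi expr2 mulrNN mulr1 => /eqP.
by rewrite -addr_eq0 -mulr2n pnatr_eq0.
Qed.

Lemma form_cliff a f A u g : A \in unitmx -> isNF f -> isNF g ->
  has_cliff_form (mkop (fun x y => cn * KF a f A u g x y)).
Proof.
move=> hA [kf [vf [d [D Hf]]]] [kg [vg [bg [B Hg]]]].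
exists a, d, (u + vf), vg, bg, (symm D), (symm B), A, (kf + kg).
split; rewrite ?Bmat_symm //.
rewrite cliff_kernel; apply: mkop_ext => x y; congr (_ * _).
apply: eq_bigr => w _; rewrite Hf Hg /NF0 /NF !qf_symm dotv0l expr0z sgnF20.
rewrite (addrA (A *m y) u vf) (dotvDr w (A *m y + u) vf) sgnF2D (dotvC w vf) (expfzDr _ _ omega8_neq0).
ring.
Qed.


End Kern.

Lemma ipowD (p q : 'F_2) : ipow (p + q) = ipow p * ipow q * sgnF2 (p * q).
Proof.
have hi := sqrCi algC.
rewrite /ipow /sgnF2; case: (F2P p) => ->; case: (F2P q) => ->;
  rewrite ?eqxx /= ?mul1r ?mulr1 ?mul0r ?mulr0 //=.
by rewrite -expr2 hi mulrNN mulr1.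
Qed.

Lemma ipow_sum m (y : 'I_m -> 'F_2) :
  ipow (\sum_j y j) =
  \prod_j ipow (y j) * sgnF2 (\sum_(j < m) \sum_(k < m) (if (j < k)%N then y j * y k else 0)).
Proof.
elim: m y => [|m IH] y.
  by rewrite !big_ord0 /ipow /= mul1r.
have HP : \sum_(j < m.+1) \sum_(k < m.+1) (if (j < k)%N then y j * y k else 0) =
    \sum_(j < m) \sum_(k < m)
      (if (j < k)%N then y (widen_ord (leqnSn m) j) * y (widen_ord (leqnSn m) k) else 0)
      + (\sum_(j < m) y (widen_ord (leqnSn m) j)) * y ord_max.
  rewrite big_ord_recr /= [X in _ + X = _]big1 ?addr0; last first.
    by move=> k _; rewrite ltnNge -ltnS ltn_ord.
  rewrite mulr_suml -big_split; apply: eq_bigr => j _.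
  by rewrite big_ord_recr /= ltn_ord.
rewrite HP big_ord_recr /= ipowD IH big_ord_recr /=.
rewrite sgnF2D; ring.
Qed.

Lemma sgn_mul_ipow (x y : 'F_2) :
  sgnF2 (x * y) = ipow (x + y) * (ipow x * sgnF2 x) * (ipow y * sgnF2 y).
Proof.
have hi := sqrCi algC.
rewrite /ipow /sgnF2; case: (F2P x) => ->; case: (F2P y) => ->;
  rewrite ?eqxx /= ?mul1r ?mulr1 ?mul0r ?mulr0 //=.
all: ring: hi.
Qed.

Lemma omega8_sqr : omega8 ^+ 2 = 'i.
Proof.
have hi := sqrCi algC.
have h2 : sqrtC 2 ^+ 2 = 2 :> algC by rewrite sqrtCK.
have h2' : sqrtC 2 != 0 :> algC by rewrite sqrtC_eq0 pnatr_eq0.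
rewrite /omega8 exprMn exprVn h2.
by field: hi.
Qed.

Section NFalg.
Variable n : nat.
Implicit Types (x y z w s : bvec n).

Lemma isNF_ext (f g : bvec n -> algC) : (forall s, f s = g s) -> isNF f -> isNF g.
Proof. by move=> E [k [v [b [B H]]]]; exists k, v, b, B => s; rewrite -E H. Qed.

Definition hadam (b1 b2 : bvec n) : bvec n := \col_j (b1 j 0 * b2 j 0).

Lemma qfD B1 B2 s : qf (B1 + B2) s = qf B1 s + qf B2 s.
Proof.
rewrite /qf -big_split; apply: eq_bigr => j _; rewrite -big_split.
by apply: eq_bigr => k _; rewrite mxE !mulrDl.
Qed.

Lemma F2_sqr (p : 'F_2) : p * p = p.
Proof. by case: (F2P p) => ->; apply/eqP. Qed.

Lemma isNF_mul f g : isNF f -> isNF g -> isNF (fun s => f s * g s).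
Proof.
move=> [k1 [v1 [b1 [B1 H1]]]] [k2 [v2 [b2 [B2 H2]]]].
exists (k1 + k2), (v1 + v2 + hadam b1 b2), (b1 + b2), (B1 + B2) => s.
rewrite H1 H2 /NF (expfzDr _ _ omega8_neq0) !dotvDl !sgnF2D qfD sgnF2D.
have key : sgnF2 (dotv (hadam b1 b2) s) * \prod_j ipow ((b1 + b2) j 0 * s j 0)
       = \prod_j ipow (b1 j 0 * s j 0) * \prod_j ipow (b2 j 0 * s j 0).
  rewrite /dotv sgnF2_sum -big_split -big_split /=; apply: eq_bigr => j _.
  have hi := sqrCi algC.
  rewrite !mxE; case: (F2P (b1 j 0)) => ->; case: (F2P (b2 j 0)) => ->;
  case: (F2P (s j 0)) => ->; rewrite /ipow /sgnF2 /=; ring: hi.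
ring: key.
Qed.

Lemma NF_isNF k (v b : bvec n) (B : 'M['F_2]_n) : isNF (NF k v b B).
Proof. by exists k, v, b, B. Qed.

Lemma isNF_omega k : isNF (fun _ : bvec n => omega8 ^ k).
Proof.
exists k, 0, 0, 0 => s; rewrite /NF dotv0l sgnF20 big1 ?mul1r.
  by rewrite /qf big1 ?mulr1 // => j _; rewrite big1 // => l _; rewrite mxE !mul0r.
by move=> j _; rewrite mxE mul0r.
Qed.

Lemma isNF_one : isNF (fun _ : bvec n => 1).
Proof. by apply: isNF_ext (isNF_omega 0) => s; rewrite expr0z. Qed.

Lemma isNF_sgn_dot v : isNF (fun s => sgnF2 (dotv v s)).
Proof.
apply: isNF_ext (isNF_mul (isNF_omega 0) (NF_isNF 0 v 0 0)) => s.
rewrite /NF expr0z !mul1r big1 ?mul1r.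
  by rewrite /qf big1 ?mulr1 // => j _; rewrite big1 // => l _; rewrite mxE !mul0r.
by move=> j _; rewrite mxE mul0r.
Qed.

Lemma isNF_ipow_dot c : isNF (fun s => ipow (dotv c s)).
Proof.
exists 0, 0, c, (\matrix_(j, k) (c j 0 * c k 0)) => s.
rewrite /NF expr0z dotv0l sgnF20 !mul1r /dotv ipow_sum; congr (_ * sgnF2 _).
rewrite /qf; apply: eq_bigr => j _.
rewrite [RHS]big_mkcond /=; apply: eq_bigr => k _.
case: ifP => // _; rewrite mxE; ring.
Qed.

Lemma isNF_ipow_const p : isNF (fun _ : bvec n => ipow p).
Proof.
case: (F2P p) => ->.
  by apply: isNF_ext isNF_one => s; rewrite /ipow.
by apply: isNF_ext (isNF_omega 2) => s; rewrite /ipow /= -omega8_sqr.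
Qed.

Lemma dotvZl (c : 'F_2) v s : dotv (c *: v) s = c * dotv v s.
Proof. by rewrite /dotv mulr_sumr; apply: eq_bigr => j _; rewrite mxE mulrA. Qed.

Lemma isNF_sgn_dot2 c e : isNF (fun s => sgnF2 (dotv c s * dotv e s)).
Proof.
have H : forall s, sgnF2 (dotv c s * dotv e s) =
  ipow (dotv (c + e) s) * (ipow (dotv c s) * sgnF2 (dotv c s)) *
  (ipow (dotv e s) * sgnF2 (dotv e s)).
  by move=> s; rewrite sgn_mul_ipow dotvDl.
apply: isNF_ext (fun s => esym (H s)) _.
repeat apply: isNF_mul; by [apply: isNF_ipow_dot | apply: isNF_sgn_dot].
Qed.

Lemma isNF_prod_seq (I : Type) (r : seq I) (F : I -> bvec n -> algC) :
  (forall j, isNF (F j)) -> isNF (fun s => \prod_(j <- r) F j s).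
Proof.
move=> HF; elim: r => [|j r IH].
  by apply: isNF_ext isNF_one => s; rewrite big_nil.
apply: isNF_ext (isNF_mul (HF j) IH) => s; by rewrite big_cons.
Qed.

Lemma isNF_prod (I : finType) (P : pred I) (F : I -> bvec n -> algC) :
  (forall j, isNF (F j)) -> isNF (fun s => \prod_(j | P j) F j s).
Proof.
move=> HF; apply: isNF_ext (isNF_prod_seq (filter P (index_enum I)) HF) => s.
by rewrite big_filter.
Qed.

Definition rowc (N : 'M['F_2]_n) (j : 'I_n) : bvec n := \col_k N j k.

Lemma mulmx_dot (N : 'M['F_2]_n) s j : (N *m s) j 0 = dotv (rowc N j) s.
Proof. by rewrite mxE; apply: eq_bigr => k _; rewrite mxE. Qed.

Lemma isNF_comp g (N : 'M['F_2]_n) : isNF g -> isNF (fun s => g (N *m s)).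
Proof.
move=> [k [v [b [B Hg]]]].
have E : forall s, g (N *m s) =
   omega8 ^ k * (\prod_j sgnF2 (dotv (v j 0 *: rowc N j) s) *
   (\prod_j ipow (dotv (b j 0 *: rowc N j) s) *
    \prod_(j < n) \prod_(l < n | (j < l)%N) sgnF2 (dotv (B j l *: rowc N j) s * dotv (rowc N l) s))).
  move=> s; rewrite Hg /NF [dotv v _]/dotv sgnF2_sum /qf sgnF2_sum.
  congr (_ * (_ * (_ * _))).
  - by apply: eq_bigr => j _; rewrite dotvZl mulmx_dot.
  - by apply: eq_bigr => j _; rewrite dotvZl mulmx_dot.
  apply: eq_bigr => j _; rewrite sgnF2_sum; apply: eq_bigr => l _.
  by rewrite dotvZl !mulmx_dot.
apply: isNF_ext (fun s => esym (E s)) _.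
apply: isNF_mul; first exact: isNF_omega.
apply: isNF_mul; first by apply: isNF_prod => j; apply: isNF_sgn_dot.
apply: isNF_mul; first by apply: isNF_prod => j; apply: isNF_ipow_dot.
apply: isNF_prod => j; apply: (isNF_prod (fun l => _)) => l.
exact: isNF_sgn_dot2.
Qed.

End NFalg.

Lemma sum_delta (R : pzRingType) (I : finType) (i : I) (F : I -> R) :
  \sum_j (j == i)%:R * F j = F i.
Proof.
rewrite (bigD1 i) //= eqxx mul1r big1 ?addr0 // => j /negbTE ->; by rewrite mul0r.
Qed.

Section Main.
Variable n : nat.
Implicit Types (x y z w s t : bvec n).

Definition upd w (i : 'I_n) (b : 'F_2) : bvec n := \col_j (if j == i then b else w j 0).

Lemma upd_entry w i b j : upd w i b j 0 = if j == i then b else w j 0.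
Proof. by rewrite mxE. Qed.

Lemma upd_upd w i b c : upd (upd w i c) i b = upd w i b.
Proof. by apply/matrixP => j k; rewrite !mxE; case: eqP. Qed.

Lemma upd_id w i : upd w i (w i 0) = w.
Proof. by apply/matrixP => j k; rewrite !mxE (ord1 k); case: eqP => [->|]. Qed.

Lemma dotv_upd w i b t : dotv (upd w i b) t = dotv (upd w i 0) t + b * t i 0.
Proof.
rewrite /dotv (bigD1 i) //= [in RHS](bigD1 i) //= !upd_entry eqxx mul0r add0r addrC.
congr (_ + _); apply: eq_bigr => j /negbTE ji; by rewrite !upd_entry ji.
Qed.

Lemma dotv_delta i s : dotv (delta_mx i 0) s = s i 0.
Proof.
rewrite /dotv (bigD1 i) //= big1 ?addr0; first by rewrite mxE !eqxx mul1r.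
by move=> j /negbTE ji; rewrite mxE ji mul0r.
Qed.

Definition cvec (D : 'M['F_2]_n) (i : 'I_n) : bvec n := \col_j D j i.

Lemma qf_upd (D : 'M['F_2]_n) i w b : D^T = D -> D i i = 0 ->
  qf D (upd w i b) = qf D (upd w i 0) + b * dotv (upd w i 0) (cvec D i).
Proof.
move=> Ds Dii; set W := upd w i 0.
have Wi : W i 0 = 0 by rewrite upd_entry eqxx.
have E : forall j, upd w i b j 0 = W j 0 + b * (j == i)%:R.
  by move=> j; rewrite !upd_entry; case: eqP => _; rewrite ?mulr1 ?add0r ?mulr0 ?addr0.
have Dsym : forall j k, D j k = D k j by move=> j k; rewrite -{1}Ds mxE.
have qfE : forall s, qf D s = \sum_(j < n) \sum_(k < n)
    (if (j < k)%N then D j k * s j 0 * s k 0 else 0).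
  by move=> s; apply: eq_bigr => j _; rewrite big_mkcond.
rewrite !qfE.
have -> : \sum_(j < n) \sum_(k < n)
    (if (j < k)%N then D j k * upd w i b j 0 * upd w i b k 0 else 0) =
  \sum_(j < n) \sum_(k < n) (if (j < k)%N then D j k * W j 0 * W k 0 else 0) +
  \sum_(j < n) \sum_(k < n) (b * ((j == i)%:R * (if (j < k)%N then D j k * W k 0 else 0) +
       (k == i)%:R * (if (j < k)%N then D j k * W j 0 else 0))).
  rewrite -big_split /=; apply: eq_bigr => j _; rewrite -big_split /=; apply: eq_bigr => k _.
  rewrite !E; case: ifP => jk; last by ring.
  have : ~~ ((j == i) && (k == i)).
    by apply/negP => /andP [/eqP ji /eqP ki]; move: jk; rewrite ji ki ltnn.
  case: (j == i); case: (k == i) => //= _; rewrite ?mulr0 ?mulr1 ?addr0 ?add0r; ring.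
have -> : \sum_(j < n) \sum_(k < n) (b * ((j == i)%:R * (if (j < k)%N then D j k * W k 0 else 0) +
       (k == i)%:R * (if (j < k)%N then D j k * W j 0 else 0))) =
  b * (\sum_(j < n) (j == i)%:R * \sum_(k < n) (if (j < k)%N then D j k * W k 0 else 0) +
       \sum_(k < n) (k == i)%:R * \sum_(j < n) (if (j < k)%N then D j k * W j 0 else 0)).
  have -> : \sum_(k < n) (k == i)%:R * \sum_(j < n) (if (j < k)%N then D j k * W j 0 else 0)
    = \sum_(j < n) \sum_(k < n) (k == i)%:R * (if (j < k)%N then D j k * W j 0 else 0).
    rewrite [RHS]exchange_big /=; apply: eq_bigr => k _; by rewrite mulr_sumr.
  rewrite mulrDr !mulr_sumr -big_split /=.
  apply: eq_bigr => j _; rewrite !mulr_sumr -big_split /=; apply: eq_bigr => k _.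
  by rewrite mulrDr.
congr (_ + _ * _); rewrite !sum_delta /dotv.
rewrite [RHS](bigID (fun j : 'I_n => (j < i)%N)) /= addrC; congr (_ + _).
  rewrite [LHS]big_mkcond [RHS]big_mkcond /=; apply: eq_bigr => j _.
  case: (ltngtP i j) => ij /=; rewrite ?mxE.
  - by rewrite Dsym mulrC.
  - by [].
  - have -> : j == i by apply/eqP/val_inj.
    by rewrite mul0r.
rewrite [RHS]big_mkcond; apply: eq_bigr => j _; case: ifP => // _.
by rewrite mulrC; congr (_ * _); rewrite mxE.
Qed.

Lemma NF0_upd d (D : 'M['F_2]_n) i w b : D^T = D -> D i i = 0 ->
  NF0 d D (upd w i b) =
  NF0 d D (upd w i 0) * ipow (d i 0 * b) * sgnF2 (b * dotv (upd w i 0) (cvec D i)).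
Proof.
move=> Ds Dii; rewrite /NF0 /NF !dotv0l expr0z sgnF20 !mul1r.
rewrite (qf_upd _ _ Ds Dii) sgnF2D.
rewrite [\prod_(j < n) ipow (d j 0 * upd w i b j 0)](bigD1 i) //.
rewrite [\prod_(j < n) ipow (d j 0 * upd w i 0 j 0)](bigD1 i) //= !upd_entry eqxx mulr0.
have -> : \prod_(j < n | j != i) ipow (d j 0 * upd w i b j 0) =
          \prod_(j < n | j != i) ipow (d j 0 * upd w i 0 j 0).
  by apply: eq_bigr => j /negbTE ji; rewrite !upd_entry ji.
rewrite /ipow /= ; ring.
Qed.


Lemma F2_add_cancel (p q : 'F_2) : p + q + q = p.
Proof. by rewrite -addrA -mulr2n -mulr_natr (_ : 2%:R = 0 :> 'F_2) ?mulr0 ?addr0 //; apply/eqP. Qed.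

Lemma split_sum i (H : 'I_n -> 'F_2 -> algC) (c : 'F_2) (F : bvec n -> algC) :
  \sum_(w : bvec n) (\prod_j H j (w j 0)) * F w =
  \sum_(w : bvec n) (\prod_j (if j == i then dl c (w j 0) else H j (w j 0))) *
     \sum_b H i b * F (upd w i b).
Proof.
set G := fun (b : 'F_2) (w : bvec n) => \prod_(j < n | j != i) H j (w j 0) * (H i b * F (upd w i b)).
have -> : \sum_(w : bvec n) (\prod_j H j (w j 0)) * F w = \sum_b \sum_(w : bvec n) dl (w i 0) b * G b w.
  rewrite exchange_big; apply: eq_bigr => w _; rewrite sum_dl_l /G upd_id.
  by rewrite (bigD1 i) //= mulrCA mulrA.
have -> : \sum_(w : bvec n) (\prod_j (if j == i then dl c (w j 0) else H j (w j 0))) *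
     \sum_b H i b * F (upd w i b) = \sum_b \sum_(w : bvec n) dl (w i 0) c * G b w.
  rewrite exchange_big; apply: eq_bigr => w _; rewrite mulr_sumr; apply: eq_bigr => b _.
  rewrite (bigD1 i) //= eqxx /G -mulrA; congr (_ * _).
    by rewrite /dl eq_sym.
  by congr (_ * _); apply: eq_bigr => j /negbTE ->.
apply: eq_bigr => b _.
pose sig := fun w => upd w i (w i 0 + b + c).
have sigK : involutive sig.
  move=> w; rewrite /sig upd_upd upd_entry eqxx.
  have -> : w i 0 + b + c + b + c = w i 0.
    by case: (F2P (w i 0)) => ->; case: (F2P b) => ->; case: (F2P c) => ->; apply/eqP.
  by rewrite upd_id.
rewrite (reindex_inj (inv_inj sigK)); apply: eq_bigr => w _.
rewrite /sig upd_entry eqxx /G upd_upd; congr (_ * _).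
  rewrite /dl; case: (F2P (w i 0)) => ->; case: (F2P b) => ->; case: (F2P c) => ->; by [].
congr (_ * _); apply: eq_bigr => j /negbTE ji; by rewrite upd_entry ji.
Qed.

End Main.

Section Main2.
Variable n : nat.
Implicit Types (x y z w s t a d u : bvec n) (A D : 'M['F_2]_n) (i : 'I_n).

Definition Nm (D : 'M['F_2]_n) (i : 'I_n) : 'M['F_2]_n :=
  \matrix_(j, k) ((j == k)%:R + D j i * (k == i)%:R).

Lemma Nm_mul (D : 'M['F_2]_n) i t : Nm D i *m t = t + t i 0 *: cvec D i.
Proof.
apply/matrixP => j k; rewrite (ord1 k) !mxE.
under eq_bigr do rewrite mxE mulrDl.
rewrite big_split /=; congr (_ + _).
  by under eq_bigr do rewrite eq_sym; rewrite sum_delta.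
under eq_bigr do rewrite -mulrA.
by rewrite -mulr_sumr sum_delta mulrC.
Qed.

Lemma Nm_invol (D : 'M['F_2]_n) i t : D i i = 0 -> Nm D i *m (Nm D i *m t) = t.
Proof.
move=> Dii; rewrite !Nm_mul; apply/matrixP => j k; rewrite (ord1 k) !mxE Dii mulr0 addr0.
by rewrite F2_add_cancel.
Qed.

Lemma Nm_unit (D : 'M['F_2]_n) i : D i i = 0 -> Nm D i \in unitmx.
Proof.
move=> Dii; suff E : Nm D i *m Nm D i = 1%:M by case: (mulmx1_unit E).
apply/matrixP => j k.
have := congr1 (fun M : 'M_(n, 1) => M j 0) (Nm_invol (delta_mx k 0) Dii).
rewrite mulmxA -colE mxE => ->; by rewrite !mxE eqxx andbT.
Qed.

Lemma addv_entry t s j : (t + s) j 0 = t j 0 + s j 0.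
Proof. by rewrite mxE. Qed.

Lemma Nm_entry_i D i t : D i i = 0 -> (Nm D i *m t) i 0 = t i 0.
Proof. by move=> Dii; rewrite Nm_mul !mxE Dii mulr0 addr0. Qed.

Lemma dotvZr w (a : 'F_2) v : dotv w (a *: v) = a * dotv w v.
Proof. by rewrite /dotv mulr_sumr; apply: eq_bigr => j _; rewrite mxE mulrCA. Qed.

Lemma hker_at a x w i (h : 'F_2 -> algC) : a i 0 = 0 ->
  hker a x w * h (x i 0) = hker a x w * h (w i 0).
Proof.
move=> ai; rewrite /hker (bigD1 i) //= ai /= /dl.
by case: eqP => [->|_]; rewrite ?mul0r.
Qed.

Lemma caseA a f A u g i x y : a i 0 = 0 ->
  ipow (x i 0) * KF a f A u g x y = KF a (fun w => ipow (w i 0) * f w) A u g x y.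
Proof.
move=> ai; rewrite /KF mulr_sumr; apply: eq_bigr => w _.
rewrite !mulrA (mulrC (ipow _)) (hker_at _ _ _ ai); ring.
Qed.


Lemma caseB0 a d D A u (g : bvec n -> algC) i x y :
  D^T = D -> D i i = 0 -> a i 0 = 1 -> d i 0 = 0 ->
  ipow (x i 0) * KF a (NF0 d D) A u g x y =
  KF a (fun w => NF0 d D w * ipow (dotv w (cvec D i))) (Nm D i *m A) (Nm D i *m u)
     (fun s => ipow (s i 0 + u i 0) * g (Nm D i *m s)) x y.
Proof.
move=> Ds Dii ai di.
have hi := sqrCi algC.
rewrite /KF.
have ht : Nm D i *m A *m y + Nm D i *m u = Nm D i *m (A *m y + u) by rewrite -mulmxA mulmxDr.
rewrite ht -mulmxA Nm_invol //.
have hti : (A *m y) i 0 + u i 0 = (A *m y + u) i 0 by rewrite addv_entry.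
rewrite Nm_entry_i // hti.
move: (A *m y + u) => t; move: (A *m y) => s.
rewrite mulr_sumr.
rewrite (eq_bigr (fun w => hker a x w * (ipow (x i 0) * NF0 d D w * sgnF2 (dotv w t) * g s)));
  last by move=> w _; ring.
rewrite [RHS](eq_bigr (fun w => hker a x w * (NF0 d D w * ipow (dotv w (cvec D i)) *
   sgnF2 (dotv w (Nm D i *m t)) * (ipow (t i 0) * g s)))); last by move=> w _; ring.
rewrite /hker (split_sum i (fun j p => (if a j 0 == 1 then hl else dl) (x j 0) p) (x i 0)).
rewrite [RHS](split_sum i (fun j p => (if a j 0 == 1 then hl else dl) (x j 0) p) (x i 0)).
apply: eq_bigr => w _; congr (_ * _).
rewrite ai eqxx !sum_F2 Nm_mul.
rewrite (NF0_upd d w 1 Ds Dii) (dotv_upd w i 1 t) (dotv_upd w i 1 (cvec D i)).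
rewrite !dotvDr !dotvZr !(dotv_upd w i 1) !mxE Dii di !sgnF2D.
move: (x i 0) (t i 0) (dotv (upd w i 0) (cvec D i)) => X T L.
rewrite /hl; case: (F2P X) => ->; case: (F2P T) => ->; case: (F2P L) => ->;
  rewrite /ipow /sgnF2 /=; ring: hi.
Qed.


Definition mipow (p : 'F_2) : algC := ipow p * sgnF2 p.

Lemma caseB1 a d D A u (g : bvec n -> algC) i x y :
  D^T = D -> D i i = 0 -> a i 0 = 1 -> d i 0 = 1 ->
  ipow (x i 0) * KF a (NF0 d D) A u g x y =
  KF (upd a i 0) (fun w => NF0 d D w * mipow (w i 0) * mipow (dotv w (cvec D i)))
     (Nm D i *m A) (Nm D i *m u)
     (fun s => omega8 * mipow (s i 0 + u i 0) * g (Nm D i *m s)) x y.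
Proof.
move=> Ds Dii ai di.
have hi := sqrCi algC.
rewrite /KF.
have ht : Nm D i *m A *m y + Nm D i *m u = Nm D i *m (A *m y + u) by rewrite -mulmxA mulmxDr.
rewrite ht -mulmxA Nm_invol //.
have hti : (A *m y) i 0 + u i 0 = (A *m y + u) i 0 by rewrite addv_entry.
rewrite Nm_entry_i // hti.
move: (A *m y + u) => t; move: (A *m y) => s.
rewrite mulr_sumr.
rewrite (eq_bigr (fun w => hker a x w * (ipow (x i 0) * NF0 d D w * sgnF2 (dotv w t) * g s)));
  last by move=> w _; ring.
rewrite [RHS](eq_bigr (fun w => hker (upd a i 0) x w * (NF0 d D w * mipow (w i 0) *
   mipow (dotv w (cvec D i)) *
   sgnF2 (dotv w (Nm D i *m t)) * (omega8 * mipow (t i 0) * g s)))); last by move=> w _; ring.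
rewrite /hker (split_sum i (fun j p => (if a j 0 == 1 then hl else dl) (x j 0) p) (x i 0)).
rewrite [RHS](split_sum i (fun j p => (if upd a i 0 j 0 == 1 then hl else dl) (x j 0) p) (x i 0)).
apply: eq_bigr => w _; congr (_ * _).
  by apply: eq_bigr => j _; case: eqP => // /eqP ji; rewrite upd_entry (negbTE ji).
rewrite upd_entry eqxx ai eqxx !sum_F2 Nm_mul !upd_entry !eqxx.
rewrite (NF0_upd d w 1 Ds Dii) (dotv_upd w i 1 t) (dotv_upd w i 1 (cvec D i)).
rewrite !dotvDr !dotvZr !(dotv_upd w i 1) !mxE Dii di !sgnF2D.
move: (x i 0) (t i 0) (dotv (upd w i 0) (cvec D i)) => X T L.
rewrite /hl /dl /mipow /omega8; case: (F2P X) => ->; case: (F2P T) => ->; case: (F2P L) => ->;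
  rewrite /ipow /sgnF2 /=; ring: hi.
Qed.

End Main2.

Section NFalg2.
Variable n : nat.

Lemma isNF_sgn_const p : isNF (fun _ : bvec n => sgnF2 p).
Proof.
case: (F2P p) => ->.
  by apply: isNF_ext (isNF_one n) => s; rewrite /sgnF2.
apply: isNF_ext (isNF_omega n 4) => s.
have -> : omega8 ^ 4%:Z = omega8 ^+ 4 by [].
by rewrite (_ : 4 = 2 * 2)%N // exprM omega8_sqr sqrCi /sgnF2.
Qed.

Lemma isNF_ipow_aff (c : bvec n) p : isNF (fun s => ipow (dotv c s + p)).
Proof.
have E : forall s, ipow (dotv c s) * ipow p * sgnF2 (dotv (p *: c) s) = ipow (dotv c s + p).
  by move=> s; rewrite ipowD dotvZl (mulrC p).
apply: isNF_ext E _.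
apply: isNF_mul; last exact: isNF_sgn_dot.
apply: isNF_mul; [exact: isNF_ipow_dot | exact: isNF_ipow_const].
Qed.

Lemma isNF_mipow_aff (c : bvec n) p : isNF (fun s => mipow (dotv c s + p)).
Proof.
have E : forall s, ipow (dotv c s + p) * (sgnF2 (dotv c s) * sgnF2 p) = mipow (dotv c s + p).
  by move=> s; rewrite /mipow sgnF2D.
apply: isNF_ext E _.
apply: isNF_mul; first exact: isNF_ipow_aff.
apply: isNF_mul; [exact: isNF_sgn_dot | exact: isNF_sgn_const].
Qed.

End NFalg2.

Unset Implicit Arguments.

Theorem lemma4p2 (n : nat) (a d u v b : bvec n) (D B A : 'M['F_2]_n) (k : int)
    (hD : Bmat D) (hB : Bmat B) (hA : A \in unitmx) (i : 'I_n) :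
  has_cliff_form (Pgate i *m cliff_form a d D k u v b B A).
Proof.
move: hD => /andP [/eqP Ds /forallP Dd].
have Dii : D i i = 0 by apply/eqP.
rewrite cliff_kernel Pgate_diag diag_mk.
have ei : forall s : bvec n, s i 0 = dotv (delta_mx i 0) s + 0.
  by move=> s; rewrite addr0 dotv_delta.
have hN : Nm D i *m A \in unitmx by rewrite unitmx_mul Nm_unit.
case: (F2P (a i 0)) => ai.
  rewrite (mkop_ext (g := fun x y => cn n * KF a (fun w => ipow (w i 0) * NF0 d D w) A u
     (NF k v b B) x y)); last by move=> x y; rewrite mulrCA caseA.
  apply: form_cliff => //; last exact: NF_isNF.
  apply: isNF_mul; last exact: NF_isNF.
  by apply: isNF_ext (isNF_ipow_aff (delta_mx i 0) 0) => s; rewrite -ei.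
case: (F2P (d i 0)) => di.
  rewrite (mkop_ext (g := fun x y => cn n * KF a
     (fun w => NF0 d D w * ipow (dotv w (cvec D i))) (Nm D i *m A) (Nm D i *m u)
     (fun s => ipow (s i 0 + u i 0) * NF k v b B (Nm D i *m s)) x y));
    last by move=> x y; rewrite mulrCA caseB0.
  apply: form_cliff => //.
    apply: isNF_mul; first exact: NF_isNF.
    by apply: isNF_ext (isNF_ipow_aff (cvec D i) 0) => s; rewrite addr0 dotvC.
  apply: isNF_mul; last by apply: isNF_comp; exact: NF_isNF.
  by apply: isNF_ext (isNF_ipow_aff (delta_mx i 0) (u i 0)) => s; rewrite dotv_delta.
rewrite (mkop_ext (g := fun x y => cn n * KF (upd a i 0)
     (fun w => NF0 d D w * mipow (w i 0) * mipow (dotv w (cvec D i)))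
     (Nm D i *m A) (Nm D i *m u)
     (fun s => omega8 * mipow (s i 0 + u i 0) * NF k v b B (Nm D i *m s)) x y));
  last by move=> x y; rewrite mulrCA caseB1.
apply: form_cliff => //.
  apply: isNF_mul; last first.
    by apply: isNF_ext (isNF_mipow_aff (cvec D i) 0) => s; rewrite addr0 dotvC.
  apply: isNF_mul; first exact: NF_isNF.
  by apply: isNF_ext (isNF_mipow_aff (delta_mx i 0) 0) => s; rewrite -ei.
apply: isNF_mul; last by apply: isNF_comp; exact: NF_isNF.
apply: isNF_mul; first by apply: isNF_ext (isNF_omega n 1) => s; rewrite expr1z.
by apply: isNF_ext (isNF_mipow_aff (delta_mx i 0) (u i 0)) => s; rewrite dotv_delta.
Qed.
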